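(* Let $\mathcal{F}=\{f_i\}_{i=1}^N$ be a frame for $\mathbb{R}^n$ and $\Lambda\subseteq\{1,\dots,N\}$. If $\ker(\Theta_{L(\mathcal{F}_\Lambda)})\cap\mathcal{S}_2=\ker(\Theta_{L(\mathcal{F})})\cap\mathcal{S}_2$, then a subspace $M$ of $\mathbb{R}^n$ is an $\mathcal{F}$-PR subspace if and only if it is an $\mathcal{F}_\Lambda$-PR subspace. Consequently, $M$ is a maximal $\mathcal{F}$-PR subspace if and only if it is a maximal $\mathcal{F}_\Lambda$-PR subspace.
   Context: A frame for $\mathbb{R}^n$ is a finite spanning sequence; $\mathcal{F}_\Lambda=\{f_i\}_{i\in\Lambda}$. $\mathcal{S}_2$ is the set of real symmetric $n\times n$ matrices of rank at most $2$, and $\Theta_{L(\mathcal{F}_\Lambda)}(A)=(f_i^TAf_i)_{i\in\Lambda}$ for symmetric $A$. For a finite sequence $\mathcal{G}=\{g_i\}$ in $\mathbb{R}^n$, a subspace $M$ is a $\mathcal{G}$-PR subspace if $\{P_Mg_i\}$ (with $P_M$ the orthogonal projection onto $M$) spans $M$ and whenever $x,y\in M$ satisfy $|\langle x,P_Mg_i\rangle|=|\langle y,P_Mg_i\rangle|$ for all $i$, then $x=\pm y$. It is maximal if it is not a proper subspace of another $\mathcal{G}$-PR subspace. *)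

(* Defs.v *)
From HB Require Import structures.
From mathcomp Require Import all_boot all_order all_algebra.
From mathcomp Require Import reals.
Set Implicit Arguments. Unset Strict Implicit. Unset Printing Implicit Defensive.
Import Order.TTheory GRing.Theory Num.Theory.
Local Open Scope ring_scope.

(* Vectors of R^n are row vectors 'rV[R]_n; a subspace of R^n is the row space
   of a square matrix M : 'M[R]_n (mxalgebra, scope %MS). *)

Section Defs.
Variable R : realType.
Variable n : nat.

Definition dotv (u v : 'rV[R]_n) : R := (u *m v^T) 0 0.

(* orthogonal projection onto the row space of M (acting on row vectors x |-> x *m P) *)
Definition oproj (M : 'M[R]_n) : 'M[R]_n :=
  let B := row_base M in (B^T *m invmx (B *m B^T)) *m B.

Definition is_frame (I : finType) (g : I -> 'rV[R]_n) : Prop :=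
  (\sum_(i : I) <<g i>> == 1%:M)%MS.

Definition PR_subspace (I : finType) (g : I -> 'rV[R]_n) (M : 'M[R]_n) : Prop :=
  (\sum_(i : I) <<g i *m oproj M>> == M)%MS /\
  forall x y : 'rV[R]_n, (x <= M)%MS -> (y <= M)%MS ->
    (forall i : I, `|dotv x (g i *m oproj M)| = `|dotv y (g i *m oproj M)|) ->
    x = y \/ x = - y.

Definition maximal_PR_subspace (I : finType) (g : I -> 'rV[R]_n) (M : 'M[R]_n) : Prop :=
  PR_subspace g M /\
  forall M' : 'M[R]_n, PR_subspace g M' -> (M <= M')%MS -> (M' <= M)%MS.

Definition in_S2 (A : 'M[R]_n) : Prop := A^T = A /\ (\rank A <= 2)%N.

(* Theta_{L(G)}(A) = (g_i^T A g_i)_i ; kernel membership *)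
Definition in_ker_Theta (I : finType) (g : I -> 'rV[R]_n) (A : 'M[R]_n) : Prop :=
  forall i : I, (g i *m A *m (g i)^T) 0 0 = 0.

End Defs.

Definition subfam (R : realType) (n N : nat) (F : 'I_N -> 'rV[R]_n) (L : {set 'I_N})
  : {i : 'I_N | i \in L} -> 'rV[R]_n := fun i => F (sval i).
Arguments subfam {R n N} F L i.

(* Main.v *)
Require Import Defs.
From HB Require Import structures.
From mathcomp Require Import all_boot all_order all_algebra.
From mathcomp Require Import reals.
From mathcomp Require Import zify.
Set Implicit Arguments. Unset Strict Implicit. Unset Printing Implicit Defensive.
Import Order.TTheory GRing.Theory Num.Theory.
Local Open Scope ring_scope.

Section Aux.
Variable R : realType.
Variable n : nat.

Lemma vvT_eq0 r (v : 'rV[R]_r) : v *m v^T = 0 -> v = 0.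
Proof.
move=> /matrixP /(_ 0 0); rewrite !mxE => H.
have H2 : \sum_j v 0 j ^+ 2 = 0.
  by rewrite -[RHS]H; apply: eq_bigr => j _; rewrite !mxE expr2.
apply/rowP => j; rewrite mxE.
have /psumr_eq0P := H2.
move=> /(_ (fun j _ => sqr_ge0 (v 0 j))) /(_ j isT) /eqP.
by rewrite sqrf_eq0 => /eqP.
Qed.

Lemma BBt_unit (M : 'M[R]_n) :
  row_base M *m (row_base M)^T \in unitmx.
Proof.
rewrite -row_free_unit -kermx_eq0; apply/eqP/row_matrixP => i.
rewrite row0.
set B := row_base M.
have H : row i (kermx (B *m B^T)) *m (B *m B^T) = 0.
  by rewrite -row_mul mulmx_ker row0.
set z := row i _ in H *.
have : (z *m B) *m (z *m B)^T = 0.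
  by rewrite trmx_mul mulmxA -(mulmxA z) H mul0mx.
move/vvT_eq0/eqP; rewrite mulmx_free_eq0 ?row_base_free //; by move/eqP.
Qed.

Lemma oproj_id (M : 'M[R]_n) (x : 'rV[R]_n) : (x <= M)%MS -> x *m oproj M = x.
Proof.
move=> xM; rewrite /oproj; cbv zeta.
have U := BBt_unit M.
have : (x <= row_base M)%MS by rewrite eq_row_base.
move: U; set B := row_base M; clearbody B => U.
case/submxP => w ->.
by rewrite !mulmxA -(mulmxA w B B^T) mulmxK.
Qed.

Lemma oproj_tr (M : 'M[R]_n) : (oproj M)^T = oproj M.
Proof.
by rewrite /oproj; cbv zeta; set B := row_base M; clearbody B; rewrite !trmx_mul trmx_inv trmx_mul !trmxK mulmxA.
Qed.

Lemma oproj_sub (M : 'M[R]_n) (g : 'rV[R]_n) : (g *m oproj M <= M)%MS.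
Proof. rewrite /oproj; cbv zeta; rewrite mulmxA; apply: submx_trans (submxMl _ _) _; by rewrite eq_row_base. Qed.

Lemma dot_oproj (M : 'M[R]_n) (x g : 'rV[R]_n) : (x <= M)%MS ->
  dotv x (g *m oproj M) = dotv x g.
Proof.
move=> xM; rewrite /dotv trmx_mul oproj_tr mulmxA oproj_id //.
Qed.

Definition PRc (I : finType) (g : I -> 'rV[R]_n) (M : 'M[R]_n) : Prop :=
  forall x y : 'rV[R]_n, (x <= M)%MS -> (y <= M)%MS ->
    (forall i : I, `|dotv x (g i)| = `|dotv y (g i)|) -> x = y \/ x = - y.

Lemma dot0 (v : 'rV[R]_n) : dotv 0 v = 0.
Proof. by rewrite /dotv mul0mx mxE. Qed.

Lemma PRc_span (I : finType) (g : I -> 'rV[R]_n) (M : 'M[R]_n) :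
  PRc g M -> (\sum_(i : I) <<g i *m oproj M>> == M)%MS.
Proof.
move=> H.
set S := (\sum_(i : I) <<g i *m oproj M>>)%MS.
have SM : (S <= M)%MS by apply/sumsmx_subP => i _; rewrite genmxE oproj_sub.
have [_ <-] := mxrank_leqif_eq SM.
rewrite eqn_leq mxrankS //=.
apply/contraT; rewrite -ltnNge => lt.
set K := kermx S^T.
have rK : \rank K = (n - \rank S)%N by rewrite mxrank_ker mxrank_tr.
have h1 := mxrank_sum_cap M K.
have h2 := rank_leq_col (M + K)%MS.
have h3 := rank_leq_col M.
set C := (M :&: K)%MS in h1.
have pos : (0 < \rank C)%N by lia.
have nzC : C != 0 by rewrite -mxrank_eq0 -lt0n.
have [j Hj] : exists j, row j C != 0.
  apply/existsP; move: nzC; apply: contraR => /existsPn Hn.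
  apply/eqP/row_matrixP => j; rewrite row0; exact/eqP/negbNE/Hn.
have xM : (row j C <= M)%MS by apply: submx_trans (row_sub _ _) (capmxSl _ _).
have xK : (row j C <= K)%MS by apply: submx_trans (row_sub _ _) (capmxSr _ _).
move/sub_kermxP: xK => xK.
have := H (row j C) 0 xM (sub0mx _ _).
case.
- move=> i; rewrite dot0 -(dot_oproj (g i) xM).
  have : (<<g i *m oproj M>> <= S)%MS by apply: (sumsmx_sup i) => //.
  rewrite genmxE => /submxP [w ->].
  by rewrite /dotv trmx_mul mulmxA xK mul0mx mxE normr0.
- by move=> E; rewrite E eqxx in Hj.
- by move=> E; rewrite E oppr0 eqxx in Hj.
Qed.

Lemma PR_equiv (I : finType) (g : I -> 'rV[R]_n) (M : 'M[R]_n) :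
  PR_subspace g M <-> PRc g M.
Proof.
split.
  move=> [_ H] x y xM yM E; apply: H => // i.
  by rewrite !dot_oproj.
move=> H; split; first exact: PRc_span.
move=> x y xM yM E; apply: H => // i.
by rewrite -(dot_oproj (g i) xM) -(dot_oproj (g i) yM).
Qed.

Lemma quad (x f : 'rV[R]_n) : (f *m (x^T *m x) *m f^T) 0 0 = dotv x f ^+ 2.
Proof.
rewrite mulmxA -(mulmxA (f *m x^T)) mxE big_ord1 /dotv expr2.
congr (_ * _).
by rewrite -[f *m x^T]trmxK trmx_mul trmxK mxE.
Qed.

Lemma S2_diff (x y : 'rV[R]_n) : in_S2 (x^T *m x - y^T *m y).
Proof.
split.
  by rewrite linearB /= !trmx_mul !trmxK.
apply: leq_trans (mxrank_add _ _) _.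
rewrite mxrank_opp.
have h1 := mxrankM_maxr x^T x; have h2 := mxrankM_maxr y^T y.
have h3 := rank_leq_row x; have h4 := rank_leq_row y.
exact: (leq_add (leq_trans h1 h3) (leq_trans h2 h4)).
Qed.

End Aux.

Lemma diffE (R : realType) (n : nat) (f x y : 'rV[R]_n) :
  (f *m (x^T *m x - y^T *m y) *m f^T) 0 0 = dotv x f ^+ 2 - dotv y f ^+ 2.
Proof.
rewrite mulmxBr mulmxBl [LHS]mxE [X in _ + X]mxE !quad //.
Qed.

Lemma key_step (R : realType) (n : nat) (I : finType) (g : I -> 'rV[R]_n)
  (x y : 'rV[R]_n) :
  (forall i, `|dotv x (g i)| = `|dotv y (g i)|) ->
  in_ker_Theta g (x^T *m x - y^T *m y).
Proof.
move=> E i; rewrite /in_ker_Theta diffE.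
rewrite -(real_normK (num_real (dotv x (g i)))) -(real_normK (num_real (dotv y (g i)))).
by rewrite E subrr.
Qed.

Lemma key_back (R : realType) (n : nat) (I : finType) (g : I -> 'rV[R]_n)
  (x y : 'rV[R]_n) :
  in_ker_Theta g (x^T *m x - y^T *m y) ->
  (forall i, `|dotv x (g i)| = `|dotv y (g i)|).
Proof.
move=> K i; have := K i; rewrite diffE => /eqP.
rewrite subr_eq0 -(real_normK (num_real (dotv x (g i)))) -(real_normK (num_real (dotv y (g i)))).
by rewrite eqrXn2 ?normr_ge0 // => /eqP.
Qed.
Theorem lemma3p5 (R : realType) (n N : nat) (F : 'I_N -> 'rV[R]_n)
  (L : {set 'I_N}) :
  is_frame F ->
  (forall A : 'M[R]_n,
     (in_ker_Theta (subfam F L) A /\ in_S2 A) <-> (in_ker_Theta F A /\ in_S2 A)) ->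
  forall M : 'M[R]_n,
    (PR_subspace F M <-> PR_subspace (subfam F L) M) /\
    (maximal_PR_subspace F M <-> maximal_PR_subspace (subfam F L) M).
Proof.
move=> _ Hker.
have key : forall M, PR_subspace F M <-> PR_subspace (subfam F L) M.
  move=> M; rewrite !PR_equiv; split => H x y xM yM E.
  - apply: H => //; apply: key_back.
    have [Hk _] := (proj1 (Hker (x^T *m x - y^T *m y))) (conj (key_step E) (S2_diff x y)).
    exact: Hk.
  - by apply: H => // i; apply: E.
move=> M; split; first exact: key.
split => [[H1 H2]|[H1 H2]]; split.
- exact/key.
- by move=> M' /key H3; apply: H2.
- exact/key.
- by move=> M' /key H3; apply: H2.
Qed.
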